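(* Let $C\subseteq\mathbb{C}$ be a subring, $D>0$, and let $F(A;X)=\big(\sum_i|f_i(A;X)|^2\big)^{\varepsilon/2}$ be an absolute polynomial power in $A=(A_1,\dots,A_m)$, $X=(X_1,\dots,X_n)$, with finitely many $f_i\in C[A,X]$ of degree at most $D$ and $\varepsilon\ge0$ rational. Assume $F$ is symmetric in $X$: $F(A;X_{\pi(1)},\dots,X_{\pi(n)})=F(A;X)$ for all permutations $\pi\in S_n$ (as functions on $\mathbb{C}^{m+n}$). Then there is an absolute polynomial power $\tilde F(A;\Sigma)$ in $A$ and $\Sigma=(\Sigma_1,\dots,\Sigma_n)$ with coefficients in $C$ such that $F(A;X)\sim\tilde F(A;\sigma_1(X),\dots,\sigma_n(X))$ on $\mathbb{C}^{m+n}$, with implied constants depending only on $\varepsilon$, $D$, $n$ and the number of terms of $F$.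
   Context: An absolute polynomial power with coefficients in $C$ is an expression $(\sum_i|P_i|^2)^{\varepsilon/2}$ with finitely many polynomials $P_i$ with coefficients in $C$ and $\varepsilon\ge0$ rational. The elementary symmetric polynomials $\sigma_j\in\mathbb{Z}[X_1,\dots,X_n]$ are defined by $\prod_{i=1}^n(T+X_i)=T^n+\sum_{j=1}^n\sigma_jT^{n-j}$. $\sim$ means each side is bounded by a positive constant times the other. *)

(* Defs.v *)
From HB Require Import structures.
From mathcomp Require Import all_boot all_order all_algebra all_fingroup.
From mathcomp Require Import mpoly.
From mathcomp Require Import all_classical all_reals all_analysis.
From mathcomp Require Import complex.
Set Implicit Arguments. Unset Strict Implicit. Unset Printing Implicit Defensive.
Import Order.TTheory GRing.Theory Num.Theory.
Local Open Scope ring_scope.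

Definition joinv (T : Type) (m n : nat) (a : 'I_m -> T) (x : 'I_n -> T)
  : 'I_(m + n) -> T :=
  fun i => match fintype.split i with inl j => a j | inr j => x j end.

(* absolute polynomial power (sum_{p in ps} |p(z)|^2)^(e/2), evaluated at z.
   `|w| : R[i] is the (real, nonnegative) modulus, complex.Re takes it into R. *)
Definition abspp (R : realType) (k : nat) (ps : seq {mpoly R[i][k]})
  (e : rat) (z : 'I_k -> R[i]) : R :=
  powR (\sum_(p <- ps) (complex.Re `|p.@[z]|) ^+ 2) (ratr e / 2).

Definition esymv (R : realType) (n : nat) (x : 'I_n -> R[i]) : 'I_n -> R[i] :=
  fun j => (mesym n R[i] (nat_of_ord j).+1).@[x].

(* Main.v *)
Require Import Defs.
Set Warnings "-all".
From HB Require Import structures.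
From mathcomp Require Import all_boot all_order all_algebra all_fingroup.
From mathcomp Require Import mpoly.
From mathcomp Require Import all_classical all_reals all_analysis.
From mathcomp Require Import complex.
From mathcomp Require Import ring lra.
Import Order.TTheory GRing.Theory Num.Theory.
Local Open Scope ring_scope.
Set Implicit Arguments. Unset Strict Implicit. Unset Printing Implicit Defensive.
Definition srp (R : ringType) (S : {pred R}) (h : subring_closed S) : {pred R} := S.
HB.instance Definition _ (R : ringType) (S : {pred R}) (h : subring_closed S) :=
  GRing.isSubringClosed.Build R (srp h) h.

Lemma mmap_rmorph n (K0 : ringType) (K1 K2 : comRingType) (psi : K0 -> K1)
  (h : 'I_n -> K1) (Phi : {rmorphism K1 -> K2}) (p : {mpoly K0[n]}) :
  Phi (mmap psi h p) = mmap (Phi \o psi) (Phi \o h) p.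
Proof.
rewrite /mmap rmorph_sum; apply: eq_bigr => m _.
rewrite rmorphM /mmap1 rmorph_prod /=; congr (_ * _).
by apply: eq_bigr => i _; rewrite rmorphXn.
Qed.

Lemma mmap_eq n (K0 K1 : ringType) (f1 f2 : K0 -> K1) (h1 h2 : 'I_n -> K1)
  (p : {mpoly K0[n]}) : f1 =1 f2 -> h1 =1 h2 -> mmap f1 h1 p = mmap f2 h2 p.
Proof.
move=> ef eh; rewrite /mmap; apply: eq_bigr => m _; rewrite ef; congr (_ * _).
by rewrite /mmap1; apply: eq_bigr => i _; rewrite eh.
Qed.

Lemma comp_over n k (K : comRingType) (S : subringClosed K) (p : {mpoly K[n]})
  (lq : n.-tuple {mpoly K[k]}) :
  p \is a mpolyOver n S -> (forall i, tnth lq i \is a mpolyOver k S) ->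
  p \mPo lq \is a mpolyOver k S.
Proof.
move=> /mpolyOverP hp hl; rewrite /comp_mpoly /mmap rpred_sum // => m _.
rewrite rpredM ?mpolyOverC ?hp // /mmap1 rpred_prod // => i _.
by rewrite rpredX.
Qed.

Lemma mesym_over n k (K : comRingType) (S : subringClosed K) :
  mesym n K k \is a mpolyOver n S.
Proof. by rewrite mesymE rpred_sum // => h _; rewrite mpolyOverX. Qed.

Lemma symf1_over n (K : comRingType) (S : subringClosed K) (p : {mpoly K[n]}) :
  p \is a mpolyOver n S ->
  (symf1 p).1 \is a mpolyOver n S /\ (symf1 p).2 \is a mpolyOver n S.
Proof.
move=> hp; rewrite /symf1; case: (p == 0) => /=; first by rewrite rpred0.
have hc : p@_(mlead p) \in S by move/mpolyOverP: hp.
split; first by rewrite mpolyOverZ ?mpolyOverX.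
rewrite rpredB // mpolyOverZ // comp_over ?mpolyOverX // => i.
by rewrite tnth_map mesym_over.
Qed.

Lemma symfn_over n (K : comRingType) (S : subringClosed K) k (p : {mpoly K[n]}) :
  p \is a mpolyOver n S ->
  (symfn k p).1 \is a mpolyOver n S /\ (symfn k p).2 \is a mpolyOver n S.
Proof.
elim: k p => [|k ih] p hp /=; first exact: symf1_over.
have [h1 h2] := symf1_over hp.
case: (symf1 p) h1 h2 => t1 p1 /= h1 h2.
have [h3 h4] := ih p1 h2.
case: (symfn k p1) h3 h4 => t2 p2 /= h3 h4.
by rewrite rpredD.
Qed.

Lemma symf_over n (K : comRingType) (S : subringClosed K) (p : {mpoly K[n]}) :
  p \is a mpolyOver n S -> symf p \is a mpolyOver n S.
Proof. by move=> hp; rewrite /symf; exact: (proj1 (symfn_over (tag (symfnS p)) hp)). Qed.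

Definition ev (K : comRingType) M n (z : 'I_M -> K) (y : 'I_n -> K)
  (Q : {mpoly {mpoly K[M]}[n]}) : K := mmap (meval z) y Q.
HB.instance Definition _ (K : comRingType) M n (z : 'I_M -> K) (y : 'I_n -> K) :=
  GRing.RMorphism.copy (@ev K M n z y) (mmap (meval z) y).

Definition flat (K : comRingType) m n (Q : {mpoly {mpoly K[m + n]}[n]}) :
  {mpoly K[m + n]} := Q.@[fun j => 'X_(rshift m j)].

Lemma joinv_r (T : Type) m n (a : 'I_m -> T) (y : 'I_n -> T) j :
  joinv a y (rshift m j) = y j.
Proof. by rewrite /joinv (unsplitK (inr j)). Qed.

Lemma joinv_l (T : Type) m n (a : 'I_m -> T) (y : 'I_n -> T) j :
  joinv a y (lshift n j) = a j.
Proof. by rewrite /joinv (unsplitK (inl j)). Qed.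

Lemma flat_eval (K : comRingType) m n (Q : {mpoly {mpoly K[m + n]}[n]}) a y :
  (flat Q).@[joinv a y] = ev (joinv a y) y Q.
Proof.
rewrite /flat /meval.
rewrite (mmap_rmorph _ _ (meval (joinv a y))).
apply: mmap_eq => // j /=; by rewrite mevalXU joinv_r.
Qed.

Lemma ev_comp (K : comRingType) M n k (z : 'I_M -> K) (y : 'I_n -> K)
  (p : {mpoly {mpoly K[M]}[k]}) (lq : k.-tuple {mpoly {mpoly K[M]}[n]}) :
  ev z y (p \mPo lq) = mmap (meval z) (fun i => ev z y (tnth lq i)) p.
Proof.
rewrite /comp_mpoly (mmap_rmorph _ _ (ev z y)).
by apply: mmap_eq => // c /=; rewrite /ev mmapC.
Qed.

Lemma ev_X (K : comRingType) M n (z : 'I_M -> K) (y : 'I_n -> K) j :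
  ev z y 'X_j = y j.
Proof. by rewrite /ev mmapX mmap1U. Qed.

Lemma ev_C (K : comRingType) M n (z : 'I_M -> K) (y : 'I_n -> K) c :
  ev z y c%:MP = c.@[z].
Proof. by rewrite /ev mmapC. Qed.

Lemma ev_msym (K : comRingType) M n (z : 'I_M -> K) (y : 'I_n -> K) s Q :
  ev z y (msym s Q) = ev z (fun i => y (s i)) Q.
Proof.
rewrite /msym (mmap_rmorph _ _ (ev z y)).
by apply: mmap_eq => [c|i] /=; rewrite ?ev_C ?ev_X.
Qed.

Lemma ev_mesym (K : comRingType) M n (z : 'I_M -> K) (y : 'I_n -> K) k :
  ev z y (mesym n {mpoly K[M]} k) = (mesym n K k).@[y].
Proof.
rewrite !mesymE !raddf_sum; apply: eq_bigr => h _.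
by rewrite /= /ev mmapX mevalX.
Qed.

Lemma ev_Sig (K : comRingType) M n (z : 'I_M -> K) (y : 'I_n -> K) t :
  ev z y (t \mPo [tuple mesym n {mpoly K[M]} i.+1 | i < n]) =
  ev z (fun j : 'I_n => (mesym n K j.+1).@[y]) t.
Proof.
rewrite ev_comp; apply: mmap_eq => // i.
by rewrite tnth_map tnth_ord_tuple ev_mesym.
Qed.

Definition tupA (K : comRingType) m n (i : 'I_(m + n)) : {mpoly {mpoly K[m + n]}[n]} :=
  match fintype.split i with inl _ => ('X_i)%:MP | inr j => 'X_j end.

Definition lift (K : comRingType) m n (f : {mpoly K[m + n]}) : {mpoly {mpoly K[m + n]}[n]} :=
  mmap (fun c => (c%:MP)%:MP) (@tupA K m n) f.

Lemma ev_lift (K : comRingType) m n a w (y : 'I_n -> K) (f : {mpoly K[m + n]}) :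
  ev (joinv a w) y (lift f) = f.@[joinv a y].
Proof.
rewrite /lift (mmap_rmorph _ _ (ev (joinv a w) y)) /meval.
apply: mmap_eq => [c|i] /=; first by rewrite ev_C mevalC.
rewrite /tupA /joinv; case E: (fintype.split i) => [j|j].
  by rewrite ev_C mevalXU /joinv E.
by rewrite ev_X.
Qed.

Definition PF (K : comRingType) n (F : {mpoly K[n]}) : {poly {mpoly K[n]}} :=
  \prod_(s : 'S_n) ('X - (msym s F)%:P).

Lemma PF_sym (K : comRingType) n (F : {mpoly K[n]}) j : (PF F)`_j \is symmetric.
Proof.
apply/issymP => s; rewrite -coef_map.
suff -> : map_poly (msym s) (PF F) = PF F by [].
rewrite /PF rmorph_prod [RHS](reindex_inj (mulIg s)) /=; apply: eq_bigr => t _.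
by rewrite rmorphB /= map_polyX map_polyC /= msymMm.
Qed.

Lemma PF_ev (K : comRingType) M n (z : 'I_M -> K) (y : 'I_n -> K) F :
  map_poly (ev z y) (PF F) = \prod_(s : 'S_n) ('X - (ev z (fun i => y (s i)) F)%:P).
Proof.
rewrite /PF rmorph_prod /=; apply: eq_bigr => s _.
by rewrite rmorphB /= map_polyX map_polyC /= ev_msym.
Qed.

Lemma msym_over n (K : comRingType) (S : subringClosed K) (Q : {mpoly K[n]}) s :
  Q \is a mpolyOver n S -> msym s Q \is a mpolyOver n S.
Proof. by move=> /mpolyOverP h; apply/mpolyOverP => m; rewrite mcoeff_sym. Qed.

Lemma PF_over n (K : comRingType) (S : subringClosed K) (F : {mpoly K[n]}) :
  F \is a mpolyOver n S -> PF F \is a polyOver (mpolyOver_pred S).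
Proof.
move=> hF; rewrite /PF rpred_prod // => s _.
by rewrite rpredB ?polyOverX ?polyOverC ?msym_over.
Qed.

Lemma lift_over m n (K : comRingType) (S : subringClosed K) (f : {mpoly K[m + n]}) :
  f \is a mpolyOver (m + n) S -> lift f \is a mpolyOver n (@mpolyOver_pred (m + n) _ S).
Proof.
move=> /mpolyOverP hf; rewrite /lift /mmap rpred_sum // => mm _.
rewrite rpredM ?mpolyOverC // /mmap1 rpred_prod // => i _.
rewrite rpredX // /tupA; case: (fintype.split i) => j.
  by rewrite mpolyOverC mpolyOverX.
by rewrite mpolyOverX.
Qed.

Lemma construct (K : comRingType) m n (S : subringClosed K) (f : {mpoly K[m + n]}) (j e : nat) :
  f \is a mpolyOver (m + n) S ->
  exists g : {mpoly K[m + n]}, g \is a mpolyOver (m + n) S /\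
    forall a x, g.@[joinv a (fun i : 'I_n => (mesym n K i.+1).@[x])] =
      ((\prod_(s : 'S_n) ('X - (f.@[joinv a (fun i => x (s i))])%:P))`_j) ^+ e.
Proof.
move=> hf.
pose E := (PF (lift f))`_j.
have hE : E = symf E \mPo [tuple mesym n {mpoly K[m + n]} i.+1 | i < n].
  exact/symfP/PF_sym.
have Eo : E \is a mpolyOver n (@mpolyOver_pred (m + n) _ S).
  by move/polyOverP: (PF_over (lift_over hf)) => /(_ j).
have to := symf_over Eo.
exists (flat (symf E ^+ e)); split.
  rewrite /flat rpred_mhorner ?rpredX //.
  by apply/forallP => i; rewrite mpolyOverX.
move=> a x; rewrite flat_eval rmorphXn /=; congr (_ ^+ _).
rewrite -ev_Sig -hE /E -coef_map PF_ev; congr (_`_j).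
by under eq_bigr do rewrite ev_lift.
Qed.

Definition nm (R : realType) (w : R[i]) : R := complex.Re `|w|.

Lemma nmE (R : realType) (w : R[i]) : `|w| = (nm w)%:C%C.
Proof. by rewrite /nm normc_def. Qed.

Lemma nm_ge0 (R : realType) (w : R[i]) : 0 <= nm w.
Proof. by have := normr_ge0 w; rewrite nmE lecR. Qed.

Lemma nmM (R : realType) (w v : R[i]) : nm (w * v) = nm w * nm v.
Proof. by have := normrM w v; rewrite !nmE -rmorphM /= => -[]. Qed.

Lemma nmD (R : realType) (w v : R[i]) : nm (w + v) <= nm w + nm v.
Proof. by have := ler_normD w v; rewrite !nmE -rmorphD /= lecR. Qed.

Lemma nmN (R : realType) (w : R[i]) : nm (- w) = nm w.
Proof. by rewrite /nm normrN. Qed.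

Lemma nmB (R : realType) (w v : R[i]) : nm (w - v) <= nm w + nm v.
Proof. by rewrite -(nmN v) nmD. Qed.

Lemma nm0 (R : realType) : nm (0 : R[i]) = 0.
Proof. by rewrite /nm normr0. Qed.

Lemma nm1 (R : realType) : nm (1 : R[i]) = 1.
Proof. by rewrite /nm normr1. Qed.

Lemma nmX (R : realType) (w : R[i]) k : nm (w ^+ k) = nm w ^+ k.
Proof. by elim: k => [|k ih]; rewrite ?expr0 ?nm1 // !exprS nmM ih. Qed.

Lemma nm_sum (R : realType) (I : Type) (s : seq I) (F : I -> R[i]) :
  nm (\sum_(i <- s) F i) <= \sum_(i <- s) nm (F i).
Proof.
elim: s => [|x s ih]; first by rewrite !big_nil nm0.
rewrite !big_cons; apply: le_trans (nmD _ _) _; exact: lerD.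
Qed.

Lemma nm_eq0 (R : realType) (w : R[i]) : (nm w == 0) = (w == 0).
Proof. by rewrite -[w == 0]normr_eq0 nmE -(inj_eq (@complexI _)). Qed.

Lemma coef_bound (R : realType) (I : Type) (ss : seq I) (r : I -> R[i]) (rho : R) :
  0 <= rho -> (forall s, nm (r s) <= rho) ->
  leq (size (\prod_(s <- ss) ('X - (r s)%:P))) (size ss).+1 /\
  forall j, nm ((\prod_(s <- ss) ('X - (r s)%:P))`_j) <= 2 ^+ size ss * rho ^+ (size ss - j).
Proof.
move=> rho0 hr; elim: ss => [|s ss [hsz ih]].
  rewrite big_nil size_poly1; split=> // j; rewrite coef1 /= expr0 mul1r.
  by case: j => [|j] /=; rewrite ?nm1 ?nm0.
set P := \prod_(s <- ss) _ in hsz ih *; rewrite big_cons /=; split.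
  apply: leq_trans (size_mul_leq _ _) _; rewrite size_XsubC.
  by rewrite add2n /=.
set k := size ss in hsz ih *.
move=> j; rewrite mulrBl coefB coefXM coefCM.
have hP : forall i, nm (r s * P`_i.+1) <= 2 ^+ k * rho ^+ (k - i).
  move=> i; rewrite nmM; case: (ltnP i k) => hik.
    have -> : (k - i = (k - i.+1).+1)%N by rewrite subnSK.
    by rewrite exprS mulrCA; apply: ler_pM; rewrite ?nm_ge0 ?hr ?ih.
  rewrite nth_default ?nm0 ?mulr0 ?mulr_ge0 ?exprn_ge0 //.
  exact: leq_trans hsz _.
case: j => [|i] /=.
  rewrite -/P sub0r nmN nmM; apply: le_trans (ler_pM (nm_ge0 _) (nm_ge0 _) (hr s) (ih 0%N)) _.
  rewrite subn0 !exprS.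
  have ha : 0 <= 2 ^+ k :> R by rewrite exprn_ge0.
  have hb : 0 <= rho ^+ k by rewrite exprn_ge0.
  have hab : 0 <= rho * (2 ^+ k * rho ^+ k) by rewrite !mulr_ge0.
  nra.
rewrite -/P; apply: le_trans (nmB _ _) _.
rewrite subSS; apply: le_trans (lerD (ih i) (hP i)) _.
rewrite exprS; set t := _ * rho ^+ (k - i).
have : 0 <= t by rewrite /t mulr_ge0 ?exprn_ge0.
rewrite /t; nra.
Qed.

Lemma root_bound (R : realType) (P : {poly R[i]}) k r : (0 < k)%N -> size P = k.+1 ->
  P`_k = 1 -> P.[r] = 0 ->
  exists2 j, (j < k)%N & nm r ^+ (k - j) <= k%:R * nm P`_j.
Proof.
move=> k0 hs hk hr.
case: (boolP [exists j : 'I_k, nm r ^+ (k - j) <= k%:R * nm P`_j]).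
  by move=> /existsP [j hj]; exists j.
move=> /existsPn hn; exfalso.
have hn' : forall j : 'I_k, k%:R * nm P`_j < nm r ^+ (k - j).
  by move=> j; have := hn j; rewrite ltNge.
have := nm_ge0 r; rewrite le_eqVlt => /orP [/eqP rz|rpos].
  have := hn' (Ordinal k0); rewrite /= -rz subn0 expr0n gtn_eqF //=.
  by rewrite ltNge mulr_ge0 ?nm_ge0.
move: hr; rewrite horner_coef hs big_ord_recr /= hk mul1r => /eqP.
rewrite addr_eq0 => /eqP hrk.
have h1 : nm r ^+ k <= \sum_(i < k) nm P`_i * nm r ^+ i.
  rewrite -nmX -[r ^+ k]opprK -hrk nmN. apply: le_trans (nm_sum _ _) _.
  by apply: ler_sum => i _; rewrite nmM nmX.
have h2 : \sum_(i < k) k%:R * (nm P`_i * nm r ^+ i) < \sum_(i < k) nm r ^+ k.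
  apply: ltr_sum; first by apply/hasP; exists (Ordinal k0); rewrite ?mem_index_enum.
  move=> i _; have -> : nm r ^+ k = nm r ^+ (k - i) * nm r ^+ i.
    by rewrite -exprD subnK // ltnW.
  by rewrite mulrA ltr_pM2r ?exprn_gt0.
move: h2; rewrite -mulr_sumr sumr_const card_ord -mulr_natl.
by rewrite mulr1 -[nm r ^+ k *+ k]mulr_natl ltr_pM2l ?ltr0n // ltNge h1.
Qed.

Definition gfun (K : comRingType) m n (f : {mpoly K[m + n]}) (j e : nat) : {mpoly K[m + n]} :=
  flat ((symf ((PF (lift f))`_j)) ^+ e).

Lemma gfun_over (K : comRingType) m n (S : subringClosed K) (f : {mpoly K[m + n]}) j e :
  f \is a mpolyOver (m + n) S -> gfun f j e \is a mpolyOver (m + n) S.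
Proof.
move=> hf.
have Eo : (PF (lift f))`_j \is a mpolyOver n (@mpolyOver_pred (m + n) _ S).
  by move/polyOverP: (PF_over (lift_over hf)) => /(_ j).
have to := symf_over Eo.
rewrite /gfun /flat rpred_mhorner ?rpredX //.
by apply/forallP => i; rewrite mpolyOverX.
Qed.

Lemma gfun_eval (K : comRingType) m n (f : {mpoly K[m + n]}) j e a x :
  (gfun f j e).@[joinv a (fun i : 'I_n => (mesym n K i.+1).@[x])] =
      ((\prod_(s : 'S_n) ('X - (f.@[joinv a (fun i => x (s i))])%:P))`_j) ^+ e.
Proof.
pose E := (PF (lift f))`_j.
have hE : E = symf E \mPo [tuple mesym n {mpoly K[m + n]} i.+1 | i < n].
  exact/symfP/PF_sym.
rewrite /gfun -/E flat_eval rmorphXn /=; congr (_ ^+ _).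
rewrite -ev_Sig -hE /E -coef_map PF_ev; congr (_`_j).
by under eq_bigr do rewrite ev_lift.
Qed.

Lemma le_sum_mem (R : realType) (I : eqType) (s : seq I) (h : I -> R) x :
  (forall y, 0 <= h y) -> x \in s -> h x <= \sum_(y <- s) h y.
Proof.
move=> h0 xs; rewrite (perm_big _ (perm_to_rem xs)) big_cons.
by rewrite lerDl sumr_ge0.
Qed.

Lemma sum_le_const (R : realType) (I : eqType) (s : seq I) (h : I -> R) c :
  (forall x, x \in s -> h x <= c) -> \sum_(x <- s) h x <= (size s)%:R * c.
Proof.
elim: s => [|y s ih] hs; first by rewrite big_nil mul0r.
rewrite big_cons /= -add1n natrD mulrDl mul1r lerD ?hs ?mem_head //.
by apply: ih => x xs; apply: hs; rewrite in_cons xs orbT.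
Qed.

Lemma powR_root (R : realType) (y : R) L : (0 < L)%N -> 0 <= y ->
  (y ^+ L) `^ (L%:R^-1) = y.
Proof.
move=> L0 y0; rewrite -powR_mulrn // -powRrM mulfV ?powRr1 //.
by rewrite pnatr_eq0 -lt0n.
Qed.

Lemma powR_rootX (R : realType) (G : R) L : (0 < L)%N -> 0 <= G ->
  (G `^ (L%:R^-1)) ^+ L = G.
Proof.
move=> L0 G0; rewrite -powR_mulrn ?powR_ge0 // -powRrM mulVf ?powRr1 //.
by rewrite pnatr_eq0 -lt0n.
Qed.

Lemma lerXn2_inv (R : realType) (u v : R) L : (0 < L)%N -> 0 <= u -> 0 <= v ->
  u ^+ L <= v ^+ L -> u <= v.
Proof.
move=> L0 u0 v0 h; rewrite -(powR_root L0 u0) -(powR_root L0 v0).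
by apply: ge0_ler_powR; rewrite ?invr_ge0 ?ler0n ?nnegrE ?exprn_ge0.
Qed.

Unset Implicit Arguments.
Theorem lemma4p3 (R : realType) (n D N : nat) (eps : rat) :
  (0 < D)%N -> 0 <= eps ->
  exists c1 c2 : R, 0 < c1 /\ 0 < c2 /\
  forall (m : nat) (C : {pred R[i]}), subring_closed C ->
  forall fs : seq {mpoly R[i][m + n]},
    size fs = N ->
    (forall f : {mpoly R[i][m + n]}, f \in fs ->
       f \is a mpolyOver (m + n) C /\ (msize f <= D.+1)%N) ->
    (forall (s : {perm 'I_n}) (a : 'I_m -> R[i]) (x : 'I_n -> R[i]),
       abspp fs eps (joinv a (fun j => x (s j))) = abspp fs eps (joinv a x)) ->
    exists (gs : seq {mpoly R[i][m + n]}) (e' : rat),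
      0 <= e' /\ (forall g : {mpoly R[i][m + n]}, g \in gs -> g \is a mpolyOver (m + n) C) /\
      forall (a : 'I_m -> R[i]) (x : 'I_n -> R[i]),
        abspp fs eps (joinv a x) <= c2 * abspp gs e' (joinv a (esymv x)) /\
        abspp gs e' (joinv a (esymv x)) <= c1 * abspp fs eps (joinv a x).
Proof.
move=> D0 eps0.
pose K := size (index_enum {perm 'I_n}).
have K0 : (0 < K)%N.
  rewrite lt0n size_eq0; apply/eqP => h.
  by move: (mem_index_enum (1%g : {perm 'I_n})); rewrite h.
pose L := K`!.
have L0 : (0 < L)%N := fact_gt0 K.
pose b : R := ratr eps / 2.
have b0 : 0 <= b by rewrite divr_ge0 ?ler0q.
pose c0 : R := (N * K)%:R * 4 ^+ (K * L) + 1.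
pose c3 : R := (N * K ^ 2)%:R + 1.
exists (c0 `^ b), (c3 `^ b).
have c0pos : 1 <= c0.
  by rewrite /c0 lerDr mulr_ge0 // exprn_ge0 // ler0n.
have c3pos : 1 <= c3 by rewrite /c3 lerDr ler0n.
split; first by apply: powR_gt0; apply: lt_le_trans c0pos.
split; first by apply: powR_gt0; apply: lt_le_trans c3pos.
move=> m C hC fs hN hfs hsym.
pose e j := (L %/ (K - j))%N.
have he : forall j, (j < K)%N -> (e j * (K - j) = L)%N.
  by move=> j jK; rewrite divnK // dvdn_fact // subn_gt0 jK leq_subr.
pose gs := [seq gfun f j (e j) | f <- fs, j <- iota 0 K].
exists gs, (eps / L%:R).
split; first by rewrite divr_ge0 ?ler0n.
split.
  move=> g /allpairsP [[f j] [hf _ ->]] /=.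
  exact: (@gfun_over _ _ _ (srp hC) f j (e j) (proj1 (hfs f hf))).
move=> a x.
pose Pf (f : {mpoly R[i][m + n]}) :=
  \prod_(s : 'S_n) ('X - (f.@[joinv a (fun i => x (s i))])%:P).
pose T := \sum_(f <- fs) nm (f.@[joinv a x]) ^+ 2.
have T0 : 0 <= T by rewrite sumr_ge0 // => f _; rewrite exprn_ge0 ?nm_ge0.
pose G := \sum_(f <- fs) \sum_(j <- iota 0 K) nm ((Pf f)`_j ^+ e j) ^+ 2.
have G0 : 0 <= G.
  by rewrite sumr_ge0 // => f _; rewrite sumr_ge0 // => j _; rewrite exprn_ge0 ?nm_ge0.
have eF : abspp fs eps (joinv a x) = T `^ b by [].
have eG : abspp gs (eps / L%:R) (joinv a (esymv x)) = (G `^ (L%:R^-1)) `^ b.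
  rewrite /abspp -powRrM; congr (_ `^ _).
    rewrite big_allpairs_dep /=; apply: eq_bigr => f _; apply: eq_bigr => j _.
    by rewrite /esymv gfun_eval.
  by rewrite fmorph_div rmorph_nat /b mulrAC mulrC.
rewrite eF eG.
have [eps_0|eps_pos] : eps = 0 \/ 0 < eps.
  by move: eps0; rewrite le_eqVlt => /orP [/eqP <-|->]; [left|right].
  have b_0 : b = 0 by rewrite /b eps_0 rmorph0 mul0r.
  by rewrite b_0 !powRr0 mulr1 lexx.
have bpos : 0 < b by rewrite /b divr_gt0 ?ltr0q.
pose G' := G `^ (L%:R^-1).
have G'0 : 0 <= G' := powR_ge0 _ _.
have G'L : G' ^+ L = G := powR_rootX L0 G0.
have hsym' : forall s : {perm 'I_n},
    \sum_(f <- fs) nm (f.@[joinv a (fun i => x (s i))]) ^+ 2 = T.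
  move=> s; apply: (powR_injective bpos) (hsym s a x);
    by rewrite nnegrE sumr_ge0 // => f _; rewrite exprn_ge0 ?nm_ge0.
pose rho := Num.sqrt T.
have hr : forall f (s : {perm 'I_n}), f \in fs -> nm (f.@[joinv a (fun i => x (s i))]) <= rho.
  move=> f s hf; rewrite -(ger0_norm (nm_ge0 _)) -sqrtr_sqr ler_sqrt //.
  rewrite -(hsym' s).
  apply: (le_sum_mem (h := fun f => nm (f.@[joinv a (fun i => x (s i))]) ^+ 2)) => //.
  by move=> y; rewrite exprn_ge0 ?nm_ge0.
have rho0 : 0 <= rho := sqrtr_ge0 _.
have rho2 : rho ^+ 2 = T := sqr_sqrtr T0.
have heL : forall j, (j < K)%N -> (e j <= L)%N.
  move=> j jK; rewrite -(he j jK) leq_pmulr // subn_gt0 //.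
have hU : forall f j, f \in fs -> (j < K)%N ->
    nm ((Pf f)`_j ^+ e j) ^+ 2 <= 4 ^+ (K * L) * T ^+ L.
  move=> f j hf jK.
  have [_ cb] := coef_bound (index_enum {perm 'I_n})
     (r := fun s => f.@[joinv a (fun i => x (s i))]) rho0 (fun s => hr f s hf).
  have := cb j; rewrite -/K => cbj.
  rewrite nmX -exprM.
  have h1 : nm (Pf f)`_j ^+ (e j * 2) <= (2 ^+ K * rho ^+ (K - j)) ^+ (e j * 2).
    by apply: lerXn2r; rewrite ?nnegrE ?nm_ge0 ?mulr_ge0 ?exprn_ge0.
  apply: le_trans h1 _.
  rewrite exprMn -!exprM -rho2 -exprM.
  have -> : ((K - j) * (e j * 2) = L * 2)%N by rewrite mulnA [((K - j) * _)%N]mulnC he.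
  rewrite [(2 * L)%N]mulnC exprM ler_wpM2r ?exprn_ge0 //.
  have -> : (4 : R) = 2 ^+ 2 by rewrite -natrX.
  rewrite -!exprM; apply: (ler_weXn2l (x := 2)); first by rewrite ler1n.
  have := heL j jK => h.
  by rewrite [(2 * _)%N]mulnC -mulnA leq_mul2l leq_mul2r h !orbT.
have hGU : G <= (c0 * T) ^+ L.
  have h1 : G <= N%:R * (K%:R * (4 ^+ (K * L) * T ^+ L)).
    rewrite -hN; apply: sum_le_const => f hf.
    rewrite -{2}(size_iota 0 K); apply: sum_le_const => j.
    rewrite mem_iota add0n => /andP [_ jK].
    exact: hU.
  apply: le_trans h1 _.
  rewrite exprMn mulrA mulrA -natrM; apply: ler_wpM2r; first by rewrite exprn_ge0.
  apply: le_trans (ler_eXnr L0 c0pos).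
  by rewrite /c0 lerDl.
have hG'U : G' <= c0 * T.
  apply: (lerXn2_inv L0) => //; first by rewrite mulr_ge0 // (le_trans _ c0pos).
  by rewrite G'L.
have K1 : 1 <= K%:R :> R by rewrite ler1n.
have hL : forall f, f \in fs -> nm (f.@[joinv a x]) ^+ 2 <= K%:R ^+ 2 * G'.
  move=> f hf.
  pose r1 := f.@[joinv a (fun i => x ((1%g : {perm 'I_n}) i))].
  have er1 : r1 = f.@[joinv a x].
    rewrite /r1; apply: meval_eq => i; rewrite /joinv.
    by case: (fintype.split i) => j //; rewrite perm1.
  have ePf : Pf f = \prod_(z <- [seq f.@[joinv a (fun i => x (s i))] | s : {perm 'I_n} <- index_enum {perm 'I_n}]) ('X - z%:P).
    by rewrite big_map.
  have hsz : size (Pf f) = K.+1 by rewrite ePf size_prod_XsubC size_map.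
  have hlc : (Pf f)`_K = 1.
    have : Pf f \is monic by apply: monic_prod_XsubC.
    by move/monicP; rewrite lead_coefE hsz.
  have hroot : (Pf f).[r1] = 0.
    apply/rootP; rewrite ePf root_prod_XsubC.
    by apply/mapP; exists 1%g; rewrite ?mem_index_enum.
  have [j jK hj] := root_bound K0 hsz hlc hroot.
  have hterm : nm ((Pf f)`_j ^+ e j) ^+ 2 <= G.
    have h2 : nm ((Pf f)`_j ^+ e j) ^+ 2 <= \sum_(j0 <- iota 0 K) nm ((Pf f)`_j0 ^+ e j0) ^+ 2.
      apply: (le_sum_mem (h := fun j0 => nm ((Pf f)`_j0 ^+ e j0) ^+ 2)).
        by move=> y; rewrite exprn_ge0 ?nm_ge0.
      by rewrite mem_iota add0n jK.
    apply: le_trans h2 _.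
    apply: (le_sum_mem (h := fun f => \sum_(j0 <- iota 0 K) nm ((Pf f)`_j0 ^+ e j0) ^+ 2)) => //.
    by move=> y; rewrite sumr_ge0 // => j0 _; rewrite exprn_ge0 ?nm_ge0.
  rewrite -er1; apply: (lerXn2_inv L0); rewrite ?exprn_ge0 ?nm_ge0 ?mulr_ge0 //.
  rewrite [X in _ <= X]exprMn G'L -exprM.
  have -> : (2 * L = (K - j) * (2 * e j))%N by rewrite mulnCA [((K - j) * _)%N]mulnC he.
  rewrite exprM.
  have h1 : (nm r1 ^+ (K - j)) ^+ (2 * e j) <= (K%:R * nm (Pf f)`_j) ^+ (2 * e j).
    by apply: lerXn2r; rewrite ?nnegrE ?exprn_ge0 ?mulr_ge0 ?ler0n ?nm_ge0 ?nm_ge0.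
  apply: le_trans h1 _.
  rewrite exprMn; apply: ler_pM; rewrite ?exprn_ge0 ?nm_ge0 //.
    rewrite -exprM; apply: (ler_weXn2l K1).
    by rewrite leq_mul2l heL ?orbT.
  by apply: le_trans hterm; rewrite nmX -!exprM mulnC.
have hTU : T <= c3 * G'.
  have h1 : T <= N%:R * (K%:R ^+ 2 * G') by rewrite -hN; apply: sum_le_const.
  apply: le_trans h1 _; rewrite mulrA -natrX -natrM; apply: ler_wpM2r => //.
  by rewrite /c3 lerDl.
have c30 : 0 <= c3 by apply: le_trans c3pos.
have c00 : 0 <= c0 by apply: le_trans c0pos.
split.
  rewrite -powRM //; apply: ge0_ler_powR => //; rewrite ?nnegrE ?mulr_ge0 //.
rewrite -powRM //; apply: ge0_ler_powR => //; rewrite ?nnegrE ?mulr_ge0 //.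
Qed.
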